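(* Let $L$ be a semiprime right Leibniz algebra and $Q$ an algebra of quotients of $L$. Then for every essential ideal $I$ of $L$, $Q$ is also an algebra of quotients of $I$.
   Context: A right Leibniz algebra satisfies $[x,[y,z]]=[[x,y],z]-[[x,z],y]$. Ideals: subspaces $I$ with $[I,L]\subseteq I$, $[L,I]\subseteq I$; $L$ is semiprime if $[I,I]\ne\{0\}$ for every nonzero ideal $I$; an ideal is essential if it meets every nonzero ideal nontrivially. For a subalgebra $K$ of $Q$ and $q\in Q$: for $x\in K$ let $R_x(u)=[u,x]$, $L_x(u)=[x,u]$ on $Q$, $\mathscr{A}(K)$ the associative algebra they generate, ${}_K(q)=\mathbb{F}q+\{\sum\xi_i(q):\xi_i\in\mathscr{A}(K)\}$, $(K:q)=\{x\in K:[x,{}_K(q)]\subseteq K,[{}_K(q),x]\subseteq K\}$. $Q$ is an algebra of quotients of $K$ if for all $p,q\in Q$, $p\ne0$, there is $x\in(K:q)$ with $[x,p]\ne0$ or $y\in(K:q)$ with $[p,y]\ne0$. *)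

(* Defs.v *)
From HB Require Import structures.
From mathcomp Require Import all_boot all_algebra.
Set Implicit Arguments. Unset Strict Implicit. Unset Printing Implicit Defensive.
Import GRing.Theory.
Local Open Scope ring_scope.

Section Leibniz.
Variables (F : fieldType) (Q : lmodType F) (br : Q -> Q -> Q).

Definition bracket_bilinear : Prop :=
  (forall (a : F) (x y z : Q), br (a *: x + y) z = a *: br x z + br y z) /\
  (forall (a : F) (x y z : Q), br z (a *: x + y) = a *: br z x + br z y).

Definition right_leibniz : Prop :=
  forall x y z : Q, br x (br y z) = br (br x y) z - br (br x z) y.

Definition subspace (S : Q -> Prop) : Prop :=
  S 0 /\ forall (a : F) (x y : Q), S x -> S y -> S (a *: x + y).

Definition subalgebra (K : Q -> Prop) : Prop :=
  subspace K /\ forall x y, K x -> K y -> K (br x y).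

Definition nonzero_set (S : Q -> Prop) : Prop := exists x, S x /\ x <> 0.

Definition ideal_of (L I : Q -> Prop) : Prop :=
  subspace I /\ (forall x, I x -> L x) /\
  (forall x y, I x -> L y -> I (br x y) /\ I (br y x)).

(* [I,I] <> 0, i.e. the span of brackets of I is nonzero *)
Definition semiprime (L : Q -> Prop) : Prop :=
  forall I, ideal_of L I -> nonzero_set I ->
    exists x y, I x /\ I y /\ br x y <> 0.

Definition essential_ideal (L I : Q -> Prop) : Prop :=
  ideal_of L I /\
  forall J, ideal_of L J -> nonzero_set J ->
    exists x, I x /\ J x /\ x <> 0.

(* A(K): the associative algebra of operators on Q generated by
   R_x = [_, x] and L_x = [x, _] for x in K *)
Inductive inA (K : Q -> Prop) : (Q -> Q) -> Prop :=
| inA_R x : K x -> inA K (fun u => br u x)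
| inA_L x : K x -> inA K (fun u => br x u)
| inA_add f g : inA K f -> inA K g -> inA K (fun u => f u + g u)
| inA_scale (a : F) f : inA K f -> inA K (fun u => a *: f u)
| inA_comp f g : inA K f -> inA K g -> inA K (fun u => f (g u)).

Definition gen_by (K : Q -> Prop) (q : Q) (u : Q) : Prop :=
  exists (lam : F) (xi : Q -> Q), inA K xi /\ u = lam *: q + xi q.

Definition colon (K : Q -> Prop) (q : Q) (x : Q) : Prop :=
  K x /\ forall u, gen_by K q u -> K (br x u) /\ K (br u x).

Definition algebra_of_quotients (K : Q -> Prop) : Prop :=
  forall p q : Q, p <> 0 ->
    exists x, colon K q x /\ (br x p <> 0 \/ br p x <> 0).

End Leibniz.

(* Main.v *)
Require Import Defs.
From mathcomp Require Import all_boot all_algebra.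
From Stdlib Require Import Classical.
Set Implicit Arguments. Unset Strict Implicit. Unset Printing Implicit Defensive.
Import GRing.Theory.
Local Open Scope ring_scope.

Lemma br0l (F : fieldType) (Q : lmodType F) (br : Q -> Q -> Q) :
  bracket_bilinear br -> forall x, br 0 x = 0.
Proof.
move=> [H1 H2] x.
have := H1 (-1) x x x. rewrite scaleN1r addNr scaleN1r addNr. done.
Qed.

Lemma br0r (F : fieldType) (Q : lmodType F) (br : Q -> Q -> Q) :
  bracket_bilinear br -> forall x, br x 0 = 0.
Proof.
move=> [H1 H2] x.
have := H2 (-1) x x x. rewrite scaleN1r addNr scaleN1r addNr. done.
Qed.

Lemma brDl (F : fieldType) (Q : lmodType F) (br : Q -> Q -> Q) :
  bracket_bilinear br -> forall x y z, br (x + y) z = br x z + br y z.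
Proof. move=> [H1 H2] x y z. by have := H1 1 x y z; rewrite !scale1r. Qed.

Lemma brDr (F : fieldType) (Q : lmodType F) (br : Q -> Q -> Q) :
  bracket_bilinear br -> forall x y z, br z (x + y) = br z x + br z y.
Proof. move=> [H1 H2] x y z. by have := H2 1 x y z; rewrite !scale1r. Qed.

Lemma brZl (F : fieldType) (Q : lmodType F) (br : Q -> Q -> Q) :
  bracket_bilinear br -> forall a x z, br (a *: x) z = a *: br x z.
Proof.
move=> Hb a x z. have := (proj1 Hb) a x 0 z.
by rewrite (br0l Hb) !addr0.
Qed.

Lemma brZr (F : fieldType) (Q : lmodType F) (br : Q -> Q -> Q) :
  bracket_bilinear br -> forall a x z, br z (a *: x) = a *: br z x.
Proof.
move=> Hb a x z. have := (proj2 Hb) a x 0 z.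
by rewrite (br0r Hb) !addr0.
Qed.

Lemma leibR (F : fieldType) (Q : lmodType F) (br : Q -> Q -> Q) :
  right_leibniz br -> forall x y z,
  br (br x y) z = br x (br y z) + br (br x z) y.
Proof. move=> Hl x y z. by rewrite Hl subrK. Qed.

Lemma ssD (F : fieldType) (Q : lmodType F) (S : Q -> Prop) :
  subspace S -> forall x y, S x -> S y -> S (x + y).
Proof. move=> [S0 SS] x y Hx Hy. by have := SS 1 x y Hx Hy; rewrite scale1r. Qed.

Lemma ssZ (F : fieldType) (Q : lmodType F) (S : Q -> Prop) :
  subspace S -> forall a x, S x -> S (a *: x).
Proof. move=> [S0 SS] a x Hx. by have := SS a x 0 Hx S0; rewrite addr0. Qed.

Lemma ssB (F : fieldType) (Q : lmodType F) (S : Q -> Prop) :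
  subspace S -> forall x y, S x -> S y -> S (x - y).
Proof.
move=> HS x y Hx Hy. apply: ssD => //. rewrite -scaleN1r. exact: ssZ.
Qed.

Lemma inA_mono (F : fieldType) (Q : lmodType F) (br : Q -> Q -> Q)
  (K1 K2 : Q -> Prop) : (forall x, K1 x -> K2 x) ->
  forall f, inA br K1 f -> inA br K2 f.
Proof.
move=> H f; elim => {f}.
- move=> x Hx; apply: inA_R; exact: H.
- move=> x Hx; apply: inA_L; exact: H.
- move=> f g _ Hf _ Hg; exact: inA_add.
- move=> a f _ Hf; exact: inA_scale.
- move=> f g _ Hf _ Hg; exact: inA_comp.
Qed.

Lemma gen_self (F : fieldType) (Q : lmodType F) (br : Q -> Q -> Q)
  (K : Q -> Prop) q : bracket_bilinear br -> K 0 -> gen_by br K q q.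
Proof.
move=> Hb K0. exists 1, (fun u => br u 0); split; first exact: inA_R.
by rewrite (br0r Hb) addr0 scale1r.
Qed.

Lemma gen_br (F : fieldType) (Q : lmodType F) (br : Q -> Q -> Q)
  (K : Q -> Prop) q l u : bracket_bilinear br -> K l -> gen_by br K q u ->
  gen_by br K q (br l u) /\ gen_by br K q (br u l).
Proof.
move=> Hb Kl [lam [xi [Hxi ->]]]; split.
- exists 0, (fun v => lam *: br l v + br l (xi v)); split.
    apply: inA_add; first by apply: inA_scale; exact: inA_L.
    apply: inA_comp => //; exact: inA_L.
  by rewrite scale0r add0r (brDr Hb) (brZr Hb).
- exists 0, (fun v => lam *: br v l + br (xi v) l); split.
    apply: inA_add; first by apply: inA_scale; exact: inA_R.
    apply: (@inA_comp _ _ _ _ (fun v => br v l)) => //; exact: inA_R.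
  by rewrite scale0r add0r (brDl Hb) (brZl Hb).
Qed.

Lemma ideal_br (F : fieldType) (Q : lmodType F) (br : Q -> Q -> Q)
  (L I : Q -> Prop) : ideal_of br L I -> forall x y, I x -> L y ->
  I (br x y) /\ I (br y x).
Proof. by move=> [_ [_ H]]. Qed.

Lemma L_ideal (F : fieldType) (Q : lmodType F) (br : Q -> Q -> Q)
  (L : Q -> Prop) : subalgebra br L -> ideal_of br L L.
Proof. move=> [HS Hm]; split=> //; split=> // x y Hx Hy; split; exact: Hm. Qed.

Lemma ideal_inter (F : fieldType) (Q : lmodType F) (br : Q -> Q -> Q)
  (L A B : Q -> Prop) : ideal_of br L A -> ideal_of br L B ->
  ideal_of br L (fun x => A x /\ B x).
Proof.
move=> [[A0 AS] [AL Abr]] [[B0 BS] [BL Bbr]]; split; [split|split].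
- by [].
- move=> a x y [? ?] [? ?]; split; [exact: AS | exact: BS].
- by move=> x [/AL].
- move=> x y [Ax Bx] Ly; have [? ?] := Abr _ _ Ax Ly; have [? ?] := Bbr _ _ Bx Ly.
  by split; split.
Qed.

Definition Sset (F : fieldType) (Q : lmodType F) (br : Q -> Q -> Q)
  (L K P : Q -> Prop) (q : Q) (x : Q) : Prop :=
  K x /\ forall u, gen_by br L q u -> P (br x u) /\ P (br u x).

Lemma Sset_ideal (F : fieldType) (Q : lmodType F) (br : Q -> Q -> Q)
  (L K P : Q -> Prop) q : bracket_bilinear br -> right_leibniz br ->
  subalgebra br L -> ideal_of br L K -> ideal_of br L P ->
  ideal_of br L (Sset br L K P q).
Proof.
move=> Hb Hl HL HK HP.
have [[K0 KS] [KL Kbr]] := HK. have PS := proj1 HP. have [P0 _] := PS.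
split; [split|split].
- split => // u _; rewrite (br0l Hb) (br0r Hb); done.
- move=> a x y [Kx Hx] [Ky Hy]; split; first exact: KS.
  move=> u Hu; have [? ?] := Hx u Hu; have [? ?] := Hy u Hu.
  rewrite (proj1 Hb) (proj2 Hb); split; apply: (proj2 PS) => //.
- by move=> x [/KL].
- move=> x l [Kx Hx] Ll; have [? ?] := Kbr _ _ Kx Ll; split; split => //.
  + move=> u Hu. have [Gl Gr] := gen_br Hb Ll Hu.
    have [Pxu Pux] := Hx u Hu. have [Pxl1 Pxl2] := Hx _ Gl. have [Plx1 Plx2] := Hx _ Gr.
    have [P1 P2] := ideal_br HP Pxu Ll. have [P3 P4] := ideal_br HP Pux Ll.
    split.
    * rewrite (leibR Hl x l u); exact: ssD.
    * rewrite (Hl u x l); exact: ssB.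
  + move=> u Hu. have [Gl Gr] := gen_br Hb Ll Hu.
    have [Pxu Pux] := Hx u Hu. have [Pxl1 Pxl2] := Hx _ Gl. have [Plx1 Plx2] := Hx _ Gr.
    have [P1 P2] := ideal_br HP Pxu Ll. have [P3 P4] := ideal_br HP Pux Ll.
    split.
    * rewrite (leibR Hl l x u); exact: ssD.
    * rewrite (Hl u l x); exact: ssB.
Qed.

Lemma colon_ideal (F : fieldType) (Q : lmodType F) (br : Q -> Q -> Q)
  (L : Q -> Prop) q : bracket_bilinear br -> right_leibniz br ->
  subalgebra br L -> ideal_of br L (colon br L q).
Proof.
move=> Hb Hl HL.
exact: (@Sset_ideal F Q br L L L q Hb Hl HL (L_ideal HL) (L_ideal HL)).
Qed.

Lemma colon_essential (F : fieldType) (Q : lmodType F) (br : Q -> Q -> Q)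
  (L : Q -> Prop) q : bracket_bilinear br -> right_leibniz br ->
  subalgebra br L -> algebra_of_quotients br L ->
  essential_ideal br L (colon br L q).
Proof.
move=> Hb Hl HL Hq; split; first exact: colon_ideal.
move=> J HJ [p [Jp p0]].
have HC := colon_ideal q Hb Hl HL.
have [x [Cx Hne]] := Hq p q p0.
have Lp : L p by have [_ [JL _]] := HJ; exact: JL.
have Lx : L x by case: Cx.
have [J1 J2] := ideal_br HJ Jp Lx.
have [C1 C2] := ideal_br HC Cx Lp.
case: Hne => H.
- by exists (br x p).
- by exists (br p x).
Qed.

Lemma essential_inter (F : fieldType) (Q : lmodType F) (br : Q -> Q -> Q)
  (L A B : Q -> Prop) : essential_ideal br L A -> essential_ideal br L B ->
  essential_ideal br L (fun x => A x /\ B x).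
Proof.
move=> [HA EA] [HB EB]; split; first exact: ideal_inter.
move=> J HJ NJ.
have [x [Ax [Jx x0]]] := EA J HJ NJ.
have HJA := ideal_inter HJ HA.
have [y [By [[Jy Ay] y0]]] := EB _ HJA (ex_intro _ x (conj (conj Jx Ax) x0)).
by exists y.
Qed.

Lemma annihilator (F : fieldType) (Q : lmodType F) (br : Q -> Q -> Q)
  (L E : Q -> Prop) : bracket_bilinear br -> right_leibniz br ->
  subalgebra br L -> semiprime br L -> algebra_of_quotients br L ->
  essential_ideal br L E -> forall w, w <> 0 ->
  exists e, E e /\ (br e w <> 0 \/ br w e <> 0).
Proof.
move=> Hb Hl HL Hsp Hq [HE EE] w w0.
case: (classic (exists e, E e /\ (br e w <> 0 \/ br w e <> 0))) => // Hn.
exfalso.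
have hE : forall e, E e -> br e w = 0 /\ br w e = 0.
  move=> e Ee; split; apply: NNPP => H; apply: Hn; exists e; split => //; by [left|right].
have [[E0 ES] [EL Ebr]] := HE.
pose Ann z := L z /\ forall e, E e -> br e z = 0 /\ br z e = 0.
have HAnn : ideal_of br L Ann.
  have [[L0 LS] Lm] := HL.
  split; [split|split].
  - split => // e _; by rewrite (br0l Hb) (br0r Hb).
  - move=> a x y [Lx Hx] [Ly Hy]; split; first exact: LS.
    move=> e Ee; have [? ?] := Hx e Ee; have [? ?] := Hy e Ee.
    rewrite (proj1 Hb) (proj2 Hb); split.
    + by rewrite (_ : br e x = 0) // (_ : br e y = 0) // scaler0 addr0.
    + by rewrite (_ : br x e = 0) // (_ : br y e = 0) // scaler0 addr0.
  - by move=> x [].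
  - move=> z l [Lz Hz] Ll; split; split; try exact: Lm.
    + move=> e Ee; have [El1 El2] := Ebr _ _ Ee Ll; have [z1 z2] := Hz e Ee.
      have [z3 z3'] := Hz _ El1; have [z4' z4] := Hz _ El2.
      split.
      * by rewrite Hl z1 z3 (br0l Hb) subr0.
      * by rewrite (leibR Hl) z2 z4 (br0l Hb) addr0.
    + move=> e Ee; have [El1 El2] := Ebr _ _ Ee Ll; have [z1 z2] := Hz e Ee.
      have [z3 z3'] := Hz _ El1; have [z4' z4] := Hz _ El2.
      split.
      * by rewrite Hl z1 z3 (br0l Hb) subr0.
      * by rewrite (leibR Hl) z2 z4' (br0r Hb) addr0.
have L0 : L 0 by case: HL => [[]].
have [x [[Lx Cx] Hne]] := Hq w w w0.
have [Lxw Lwx] := Cx w (gen_self w Hb L0).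
have [c [Ac c0]] : exists c, Ann c /\ c <> 0.
  case: Hne => H; [exists (br x w) | exists (br w x)]; split => //; split => // e Ee;
  have [Ex1 Ex2] := Ebr _ _ Ee Lx; have [h1 h2] := hE e Ee;
  have [h3 h4] := hE _ Ex1; have [h5 h6] := hE _ Ex2; split.
  - by rewrite Hl h3 h1 (br0l Hb) subr0.
  - by rewrite (leibR Hl) h2 h5 (br0r Hb) addr0.
  - by rewrite Hl h1 h3 (br0l Hb) subr0.
  - by rewrite (leibR Hl) h6 h2 (br0l Hb) addr0.
have [z [Ez [Az z0]]] := EE Ann HAnn (ex_intro _ c (conj Ac c0)).
have HM := ideal_inter HAnn HE.
have [z1 [z2 [[A1 _] [[_ E2] Hz]]]] := Hsp _ HM (ex_intro _ z (conj (conj Az Ez) z0)).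
apply: Hz. exact: (proj2 ((proj2 A1) z2 E2)).
Qed.

Theorem proposition3p13 (F : fieldType) (Q : lmodType F) (br : Q -> Q -> Q)
  (L : Q -> Prop) :
  bracket_bilinear br -> right_leibniz br ->
  subalgebra br L -> semiprime br L ->
  algebra_of_quotients br L ->
  forall I : Q -> Prop, essential_ideal br L I ->
  algebra_of_quotients br I.
Proof.
move=> Hb Hl HL Hsp Hq I HIe p q p0.
have HI := proj1 HIe.
have HIS := proj1 HI.
have HC := colon_essential q Hb Hl HL Hq.
have HJ := essential_inter HC HIe.
pose S := Sset br L (fun x => colon br L q x /\ I x) I q.
have HS : essential_ideal br L S.
  split; first exact: (Sset_ideal q Hb Hl HL (proj1 HJ) HI).
  move=> K HK NK.
  have [x [[Cx Ix] [Kx x0]]] := (proj2 HJ) K HK NK.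
  have HM := ideal_inter HK (proj1 HJ).
  have [m [m' [[Km [Cm Im]] [[Km' [Cm' Im']] Hmm]]]] :=
    Hsp _ HM (ex_intro _ x (conj (conj Kx (conj Cx Ix)) x0)).
  have Lm' : L m' by case: Cm'.
  exists (br m m'); split; [|split] => //.
  - split; first exact: (proj1 (ideal_br (proj1 HJ) (conj Cm Im) Lm')).
    move=> u Hu.
    have [L1 L2] := (proj2 Cm) u Hu. have [L3 L4] := (proj2 Cm') u Hu.
    split.
    + rewrite (leibR Hl); apply: ssD => //.
      * exact: (proj1 (ideal_br HI Im L3)).
      * exact: (proj2 (ideal_br HI Im' L1)).
    + rewrite Hl; apply: ssB => //.
      * exact: (proj2 (ideal_br HI Im' L2)).
      * exact: (proj2 (ideal_br HI Im L4)).
  - exact: (proj1 (ideal_br HK Km Lm')).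
have [e [[[Ce Ie] He] Hne]] := annihilator Hb Hl HL Hsp Hq HS p0.
exists e; split => //; split => // u Hu; apply: He.
case: Hu => [lam [xi [Hxi ->]]]; exists lam, xi; split => //.
apply: inA_mono Hxi => y; exact: (proj1 (proj2 HI)).
Qed.
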